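(* There exist absolute constants $\eta,c,C',A_1,A_2>0$ such that the following holds. Let $k\ge 3$ and $n>\eta k$ be such that $M=\frac{3.5\,k\log k}{n}$ is an integer. Define $u_j=(-1)^{M+1}\frac{j!}{M!}\big(\frac kn\big)^j s(M+1,j+1)$ for $1\le j\le M$ and $u_j=0$ otherwise; equivalently $u_j=w_j\,j!\,(\frac{k}{nM})^j$ where $w\in\mathbb{R}^M$ is the unique vector with $\sum_{j=1}^Mw_jx^j=1$ for all $x\in\{1/M,2/M,\dots,1\}$. Let $\tilde C=\hat C_{\rm seen}+\sum_{j\ge1}u_j\Phi_j$ and $\hat C=\min\{\max\{\tilde C,\hat C_{\rm seen}\},k\}$. Then under the Poisson sampling model, for every urn of $k$ balls, $$\mathbb{E}(\hat C-C)^2\le ke^{-cn/k}+k^{-0.5-3.5\frac kn\log\frac{k}{en}}+R,$$ where $R=k\exp\big(\frac{k^2\log k}{n^2}e^{-cn/k}\big)$ if $n\le A_1k\log\log k$; $R=k\big(C'\frac kn\log\frac{k^2\log k}{n^2}\big)^{2n/k}$ if $A_1k\log\log k\le n\le A_2k\sqrt{\log k}$; and $R=0$ if $n\ge A_2k\sqrt{\log k}$.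
   Context: An urn contains $k$ colored balls; $k_i$ is the number of balls of color $i$ and $C$ the number of distinct colors. Poisson sampling model: $N\sim\mathrm{Poi}(n)$ balls are drawn uniformly at random with replacement, independently of $N$; equivalently the histograms $N_i$ are independent $\mathrm{Poi}(nk_i/k)$. Fingerprints $\Phi_j=\#\{i:N_i=j\}$; $\hat C_{\rm seen}=\sum_{j\ge1}\Phi_j$. Stirling numbers of the first kind $s(a,b)$ are defined by $x(x-1)\cdots(x-a+1)=\sum_{b}s(a,b)x^b$. Logarithms are natural. (The paper states the case distinctions with $\lesssim$ and exponents with $\Theta(\cdot)$; these are expressed here through absolute constants.) *)

(* Defs.v *)
From mathcomp Require ssreflect ssrfun ssrbool eqtype ssrnat seq choice fintype bigop ssralg ssrint poly.
Set Implicit Arguments.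

Module Stir.
  Import ssreflect ssrfun ssrbool eqtype ssrnat seq choice fintype bigop ssralg ssrint poly.
  Import GRing.Theory.
  Local Open Scope ring_scope.
  Definition stirling1 (a b : nat) : int :=
    (\prod_(i < a) ('X - ((i : nat)%:Z)%:P)) `_ b.
End Stir.

From Stdlib Require Import Arith Factorial Reals List Lra.
From Coquelicot Require Import Coquelicot.
Open Scope R_scope.

Definition int_to_R (z : ssrint.int) : R :=
  match z with
  | ssrint.Posz m => INR m
  | ssrint.Negz m => - INR (S m)
  end.

Definition stirling1R (a b : nat) : R := int_to_R (Stir.stirling1 a b).

Definition poisson_pmf (l : R) (m : nat) : R := exp (- l) * l ^ m / INR (fact m).

(* Expectation of f(N_1,...,N_C) when the N_i are independent Poisson(l_i),
   ls = [l_1; ...; l_C]: iterated (total) series over N_1, N_2, ... *)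
Fixpoint pois_expect (ls : list R) (f : list nat -> R) : R :=
  match ls with
  | nil => f nil
  | l :: ls' =>
      Series (fun m => poisson_pmf l m * pois_expect ls' (fun t => f (m :: t)))
  end.

Definition fingerprint (N : list nat) (j : nat) : nat :=
  length (filter (fun x => Nat.eqb x j) N).

Definition C_seen (N : list nat) : R :=
  INR (length (filter (fun x => negb (Nat.eqb x 0)) N)).

Definition ucoef (k : nat) (n : R) (M j : nat) : R :=
  if andb (Nat.leb 1 j) (Nat.leb j M) then
    (-1) ^ (M + 1) * (INR (fact j) / INR (fact M)) * (INR k / n) ^ j
      * stirling1R (M + 1) (j + 1)
  else 0.

(* C~ = C_seen + sum_{j>=1} u_j Phi_j ; since u_j = 0 for j > M the sum is
   over 1 <= j <= M *)
Definition C_tilde (k : nat) (n : R) (M : nat) (N : list nat) : R :=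
  C_seen N + fold_right Rplus 0
    (map (fun j => ucoef k n M j * INR (fingerprint N j)) (seq 1 M)).

Definition C_hat (k : nat) (n : R) (M : nat) (N : list nat) : R :=
  Rmin (Rmax (C_tilde k n M N) (C_seen N)) (INR k).

(* An urn of k balls: list of (positive) color multiplicities k_i summing to k *)
Definition is_urn (k : nat) (ks : list nat) : Prop :=
  List.Forall (fun x => (0 < x)%nat) ks /\ list_sum ks = k.

Definition rates (k : nat) (n : R) (ks : list nat) : list R :=
  map (fun ki => n * INR ki / INR k) ks.

Definition Rterm (c C' A1 A2 : R) (k : nat) (n : R) : R :=
  let kr := INR k in
  if Rle_dec n (A1 * kr * ln (ln kr)) then
    kr * exp (kr ^ 2 * ln kr / n ^ 2 * exp (- c * n / kr))
  else if Rle_dec n (A2 * kr * sqrt (ln kr)) then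
    kr * Rpower (C' * (kr / n) * ln (kr ^ 2 * ln kr / n ^ 2)) (2 * n / kr)
  else 0.

(* Main.v *)
Require Import Defs.
From mathcomp Require ssreflect ssrfun ssrbool eqtype ssrnat seq choice fintype bigop ssralg ssrint poly.
From mathcomp Require ring.

Fixpoint ust (a b : nat) : nat :=
  match a with
  | O => match b with O => 1%nat | S _ => 0%nat end
  | S a' => ((match b with O => 0%nat | S b' => ust a' b' end) + a' * ust a' b)%nat
  end.

Module StirP.
  Import ssreflect ssrfun ssrbool eqtype ssrnat seq choice fintype bigop ssralg ssrint poly ring.
  Import GRing.Theory.
  Local Open Scope ring_scope.
  Lemma stir_eq a b : Stir.stirling1 a b = (-1) ^+ (a + b) * ((ust a b)%:Z).
  Proof.
    elim: a b => [|a IH] b.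
      rewrite /Stir.stirling1 big_ord0 coefC; case: b => [|b] //=; by rewrite mulr0.
    rewrite /Stir.stirling1 big_ord_recr /= mulrBr coefB coefMX coefMC.
    rewrite -!/(Stir.stirling1 a _).
    case: b => [|b] /=; rewrite ?plusE ?multE.
      rewrite IH !addn0 exprS PoszM. ring.
    rewrite !IH PoszD PoszM !addnS !addSn !exprS. ring.
  Qed.
End StirP.

Module StirP2.
  Import ssreflect ssrfun ssrbool eqtype ssrnat seq choice fintype bigop ssralg ssrint poly.
  Import GRing.Theory.
  Local Open Scope ring_scope.
  Lemma stir_odd a b : Stir.stirling1 a b =
     if odd (a + b) then - ((ust a b)%:Z) else (ust a b)%:Z.
  Proof. rewrite StirP.stir_eq -signr_odd. case: (odd (a+b)); by rewrite ?expr1 ?expr0 ?mulN1r ?mul1r. Qed.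
End StirP2.

From Stdlib Require Import Arith Factorial Reals Lra Lia List ZArith Bool.
From Coquelicot Require Import Coquelicot.
Open Scope R_scope.

Definition U (a b : nat) : R := INR (ust a b).

Lemma pow_m1_odd e : (-1) ^ e = if ssrnat.odd e then -1 else 1.
Proof. induction e as [|e IH]; simpl; [reflexivity|]. rewrite IH. destruct (ssrnat.odd e); simpl; ring. Qed.

Lemma stirR_eq a b : stirling1R a b = (-1) ^ (a + b) * U a b.
Proof.
  unfold stirling1R, U. rewrite StirP2.stir_odd, pow_m1_odd.
  destruct (ssrnat.odd (ssrnat.addn a b)) eqn:E.
  - replace (ssrnat.odd (a+b)) with true by (rewrite <- E; reflexivity).
    destruct (ust a b) as [|m]; simpl; [ring|].
    rewrite <- ?S_INR. ring.
  - replace (ssrnat.odd (a+b)) with false by (rewrite <- E; reflexivity).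
    simpl. ring.
Qed.

Fixpoint sumR (f : nat -> R) (n : nat) : R :=
  match n with O => 0 | S n' => sumR f n' + f n' end.
Fixpoint prodR (f : nat -> R) (n : nat) : R :=
  match n with O => 1 | S n' => prodR f n' * f n' end.

Lemma sumR_ext f g n : (forall i, (i < n)%nat -> f i = g i) -> sumR f n = sumR g n.
Proof. induction n; simpl; intros H; [reflexivity|]. rewrite IHn by (intros; apply H; lia). rewrite H by lia. reflexivity. Qed.
Lemma sumR_front f n : sumR f (S n) = f O + sumR (fun i => f (S i)) n.
Proof. induction n; simpl in *; [ring|]. rewrite IHn. ring. Qed.
Lemma sumR_plus f g n : sumR (fun i => f i + g i) n = sumR f n + sumR g n.
Proof. induction n; simpl; [ring|]. rewrite IHn; ring. Qed.
Lemma sumR_scal c f n : sumR (fun i => c * f i) n = c * sumR f n.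
Proof. induction n; simpl; [ring|]. rewrite IHn; ring. Qed.
Lemma sumR_le f g n : (forall i, (i < n)%nat -> f i <= g i) -> sumR f n <= sumR g n.
Proof. induction n; simpl; intros H; [lra|]. assert (f n <= g n) by (apply H; lia).
  assert (sumR f n <= sumR g n) by (apply IHn; intros; apply H; lia). lra. Qed.
Lemma sumR_nonneg f n : (forall i, (i < n)%nat -> 0 <= f i) -> 0 <= sumR f n.
Proof. intros H. replace 0 with (sumR (fun _ => 0) n). apply sumR_le; auto.
  induction n; simpl; [reflexivity|]. rewrite IHn; [ring|]. intros; apply H; lia. Qed.
Lemma sumR_term_le f n i : (forall j, (j < n)%nat -> 0 <= f j) -> (i < n)%nat -> f i <= sumR f n.
Proof. induction n; intros H Hi; [lia|]. simpl. destruct (Nat.eq_dec i n).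
  - subst. assert (0 <= sumR f n) by (apply sumR_nonneg; intros; apply H; lia). lra.
  - assert (f i <= sumR f n) by (apply IHn; [intros; apply H; lia| lia]). assert (0 <= f n) by (apply H; lia). lra. Qed.
Lemma sumR_const c n : sumR (fun _ => c) n = INR n * c.
Proof. induction n; simpl sumR; [simpl; ring|]. rewrite IHn, S_INR; ring. Qed.
Lemma sumR_abs f n : Rabs (sumR f n) <= sumR (fun i => Rabs (f i)) n.
Proof. induction n; simpl; [rewrite Rabs_R0; lra|]. eapply Rle_trans; [apply Rabs_triang|]. lra. Qed.

Lemma prodR_ext f g n : (forall i, (i < n)%nat -> f i = g i) -> prodR f n = prodR g n.
Proof. induction n; simpl; intros H; [reflexivity|]. rewrite IHn by (intros; apply H; lia). rewrite H by lia. reflexivity. Qed.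
Lemma prodR_zero f n i : (i < n)%nat -> f i = 0 -> prodR f n = 0.
Proof. induction n; intros Hi H; [lia|]. simpl. destruct (Nat.eq_dec i n).
  - subst. rewrite H; ring.
  - rewrite IHn; [ring|lia|auto]. Qed.
Lemma prodR_nonneg f n : (forall i, (i < n)%nat -> 0 <= f i) -> 0 <= prodR f n.
Proof. induction n; simpl; intros H; [lra|]. apply Rmult_le_pos; [apply IHn; intros; apply H; lia| apply H; lia]. Qed.
Lemma prodR_le f g n : (forall i, (i < n)%nat -> 0 <= f i <= g i) -> prodR f n <= prodR g n.
Proof. induction n; simpl; intros H; [lra|]. apply Rmult_le_compat.
  - apply prodR_nonneg; intros; apply H; lia.
  - apply H; lia.
  - apply IHn; intros; apply H; lia.
  - apply H; lia. Qed.
Lemma prodR_split f L m : prodR f (L + m) = prodR f L * prodR (fun i => f (L + i)%nat) m.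
Proof. induction m; simpl. rewrite Nat.add_0_r; ring. rewrite Nat.add_succ_r; simpl. rewrite IHm; ring. Qed.
Lemma prodR_mult f g n : prodR (fun i => f i * g i) n = prodR f n * prodR g n.
Proof. induction n; simpl; [ring|]. rewrite IHn; ring. Qed.
Lemma prodR_const c n : prodR (fun _ => c) n = c ^ n.
Proof. induction n; simpl; [ring|]. rewrite IHn; ring. Qed.
Lemma fact_prodR n : INR (fact n) = prodR (fun i => INR i + 1) n.
Proof. induction n; simpl prodR; [reflexivity|]. rewrite <- IHn. rewrite fact_simpl, mult_INR, S_INR. ring. Qed.

Lemma ust_big a b : (a < b)%nat -> ust a b = 0%nat.
Proof. revert b; induction a; intros b H; destruct b; simpl; try lia; auto.
  rewrite IHa by lia. rewrite (IHa (S b)) by lia. lia. Qed.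
Lemma ust_S0 a : ust (S a) 0 = 0%nat.
Proof. induction a; simpl in *; [reflexivity|]. rewrite IHa. lia. Qed.
Lemma ust_S1 a : ust (S a) 1 = fact a.
Proof. induction a; [reflexivity|]. change (ust (S (S a)) 1) with (ust (S a) 0 + S a * ust (S a) 1)%nat.
  rewrite ust_S0, IHa. simpl. lia. Qed.

Lemma U_rec0 a : U (S a) 0 = INR a * U a 0.
Proof. unfold U. simpl. rewrite mult_INR. simpl; ring. Qed.
Lemma U_recS a b : U (S a) (S b) = U a b + INR a * U a (S b).
Proof. unfold U. simpl. rewrite plus_INR, mult_INR. ring. Qed.

Lemma U_ident a y : sumR (fun b => U a b * y ^ b) (S a) = prodR (fun i => y + INR i) a.
Proof.
  induction a.
  - simpl. unfold U; simpl. ring.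
  - rewrite sumR_front. simpl prodR. rewrite <- IHa.
    rewrite (sumR_ext _ (fun i => y * (U a i * y ^ i) + INR a * (U a (S i) * y ^ (S i)))).
    2:{ intros i _. rewrite U_recS. simpl. ring. }
    rewrite sumR_plus, sumR_scal, sumR_scal.
    assert (E: sumR (fun i => U a (S i) * y ^ S i) (S a) = sumR (fun b => U a b * y ^ b) (S a) - U a 0).
    { rewrite (sumR_front (fun b => U a b * y ^ b)). change (sumR (fun i => U a (S i) * y ^ S i) (S a)) with
        (sumR (fun i => U a (S i) * y ^ S i) a + U a (S a) * y ^ (S a)).
      replace (U a (S a)) with 0 by (unfold U; rewrite (ust_big a (S a)) by lia; reflexivity). simpl. ring. }
    rewrite E. unfold U at 1. rewrite ust_S0. simpl INR.
    assert (INR a * U a 0 = 0).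
    { destruct a. simpl; ring. unfold U; rewrite ust_S0; simpl; ring. }
    lra.
Qed.

Lemma prodR_neg x a : prodR (fun i => - x + INR i) a = (-1) ^ a * prodR (fun i => x - INR i) a.
Proof. induction a; simpl; [ring|]. rewrite IHa. ring. Qed.

Lemma S_ident a x : sumR (fun b => stirling1R a b * x ^ b) (S a) = prodR (fun i => x - INR i) a.
Proof.
  assert (H := U_ident a (- x)). rewrite prodR_neg in H.
  rewrite (sumR_ext _ (fun b => (-1)^a * (U a b * (-x) ^ b))).
  - rewrite sumR_scal, H. rewrite <- Rmult_assoc, <- pow_add.
    replace (a + a)%nat with (2 * a)%nat by lia. rewrite pow_mult. simpl. rewrite Rmult_1_r.
    replace (-1 * -1) with 1 by ring. rewrite pow1. ring.
  - intros b _. rewrite stirR_eq, pow_add.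
    replace (- x) with (-1 * x) by ring. rewrite Rpow_mult_distr. ring.
Qed.

Lemma exp_le_exp x y : x <= y -> exp x <= exp y.
Proof. intros [H|H]; [left; apply exp_increasing; auto| subst; lra]. Qed.
Lemma ln_le_ln x y : 0 < x -> x <= y -> ln x <= ln y.
Proof. intros Hx [H|H]; [left; apply ln_increasing; auto| subst; lra]. Qed.
Lemma ln_lower y : 0 < y -> 1 - / y <= ln y.
Proof. intros Hy. assert (H := exp_ineq1_le (- ln y)). rewrite exp_Ropp, exp_ln in H by auto. lra. Qed.

Lemma exp_pow_nat x m : exp x ^ m = exp (INR m * x).
Proof. induction m; simpl pow. simpl; rewrite Rmult_0_l, exp_0; ring.
  rewrite IHm, S_INR, <- exp_plus. f_equal; ring. Qed.


Lemma sum_f_R0_nonneg f n : (forall i, 0 <= f i) -> 0 <= sum_f_R0 f n.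
Proof. intros H; induction n; simpl; [apply H|]. specialize (H (S n)). lra. Qed.
Lemma sum_f_R0_term f n : (forall i, 0 <= f i) -> f n <= sum_f_R0 f n.
Proof. intros H. destruct n; simpl; [lra|]. assert (0 <= sum_f_R0 f n) by (apply sum_f_R0_nonneg; auto). lra. Qed.

Lemma pow_fact_le_exp x n : 0 <= x -> x ^ n / INR (fact n) <= exp x.
Proof. intros Hx. eapply Rle_trans; [|apply (exp_ge_taylor x n Hx)].
  apply (sum_f_R0_term (fun k => x ^ k / INR (fact k))). intros i.
  apply Rdiv_le_0_compat; [apply pow_le; auto| apply INR_fact_lt_0]. Qed.

Lemma ln_succ_ratio j : (1 <= j)%nat -> / (INR j + 1) <= ln ((INR j + 1) / INR j).
Proof. intros Hj. assert (Hj' : 1 <= INR j) by (apply (le_INR 1); auto).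
  eapply Rle_trans; [|apply ln_lower]. 2:{ apply Rdiv_lt_0_compat; lra. }
  right. field. lra. Qed.

Lemma fact_upper j : (1 <= j)%nat ->
  INR (fact j) <= exp 1 * INR j * INR j ^ j * exp (- INR j).
Proof.
  induction j as [|j IH]; intros Hj; [lia|].
  destruct (Nat.eq_dec j 0) as [->|Hj0].
  { simpl. replace (exp 1 * 1 * (1 * 1) * exp (- (1))) with (exp 1 * exp (-(1))) by ring. rewrite <- exp_plus. replace (1 + - (1)) with 0 by ring. rewrite exp_0. lra. }
  assert (IH' := IH ltac:(lia)).
  assert (Hjr : 1 <= INR j) by (apply (le_INR 1); lia).
  rewrite fact_simpl, mult_INR, S_INR.
  assert (K : exp 1 * INR j ^ (S j) <= (INR j + 1) ^ (S j)).
  { assert (H1 : exp 1 <= ((INR j + 1) / INR j) ^ (S j)).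
    { rewrite <- Rpower_pow by (apply Rdiv_lt_0_compat; lra). unfold Rpower.
      apply exp_le_exp. rewrite S_INR.
      assert (H2 := ln_succ_ratio j ltac:(lia)).
      apply Rmult_le_compat_l with (r := INR j + 1) in H2; [|lra].
      rewrite Rinv_r in H2 by lra. lra. }
    unfold Rdiv in H1. rewrite Rpow_mult_distr, pow_inv in H1.
    apply Rmult_le_compat_r with (r := INR j ^ S j) in H1; [|apply pow_le; lra].
    rewrite Rmult_assoc, Rinv_l in H1 by (apply pow_nonzero; lra). lra. }
  assert (Hpos : 0 < exp (- INR j)) by apply exp_pos.
  replace (exp (- (INR j + 1))) with (exp (- INR j) * / exp 1)
    by (rewrite <- exp_Ropp, <- exp_plus; f_equal; ring).
  apply Rle_trans with ((INR j + 1) * (exp 1 * INR j * INR j ^ j * exp (- INR j))).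
  { apply Rmult_le_compat_l; [lra|auto]. }
  assert (He : 0 < exp 1) by apply exp_pos.
  simpl pow in K |- *.
  apply Rmult_le_reg_r with (r := exp 1); [auto|].
  replace (exp 1 * (INR j + 1) * ((INR j + 1) * (INR j + 1) ^ j) * (exp (- INR j) * / exp 1) * exp 1)
    with (exp 1 * (INR j + 1) * exp (- INR j) * ((INR j + 1) * (INR j + 1) ^ j)) by (field; lra).
  replace ((INR j + 1) * (exp 1 * INR j * INR j ^ j * exp (- INR j)) * exp 1)
    with (exp 1 * (INR j + 1) * exp (- INR j) * (exp 1 * (INR j * INR j ^ j))) by ring.
  apply Rmult_le_compat_l; [|lra].
  apply Rmult_le_pos; [apply Rmult_le_pos|]; lra.
Qed.

Lemma prodR_inv f n : (forall i, (i < n)%nat -> f i <> 0) -> prodR (fun i => / f i) n = / prodR f n.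
Proof. induction n; simpl; intros H; [field|]. rewrite IHn by (intros; apply H; lia).
  assert (f n <> 0) by (apply H; lia). assert (prodR f n <> 0).
  { clear IHn. induction n; simpl; [lra|]. apply Rmult_integral_contrapositive; split; [apply IHn|]; intros; apply H; lia. }
  field; auto. Qed.

Lemma prod_A_small m w : 0 <= w -> prodR (fun i => 1 + w / (INR i + 1)) m <= exp (INR m + w).
Proof.
  intros Hw. destruct m as [|m].
  { simpl. rewrite Rplus_0_l. apply Rle_trans with (1 + w); [lra|apply exp_ineq1_le]. }
  set (M := S m).
  assert (HM : 1 <= INR M) by (apply (le_INR 1); unfold M; lia).
  rewrite (prodR_ext _ (fun i => (INR i + 1 + w) * / (INR i + 1))).
  2:{ intros i _. field. pose proof (pos_INR i); lra. }
  rewrite prodR_mult, prodR_inv by (intros i _; pose proof (pos_INR i); lra).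
  rewrite <- fact_prodR.
  assert (H1 : prodR (fun i => INR i + 1 + w) M <= (INR M + w) ^ M).
  { rewrite <- prodR_const. apply prodR_le. intros i Hi. split.
    - pose proof (pos_INR i); lra.
    - assert (Hi' : (S i <= M)%nat) by lia. apply le_INR in Hi'. rewrite S_INR in Hi'. lra. }
  assert (H2 : INR M ^ M / INR (fact M) <= exp (INR M)) by (apply pow_fact_le_exp; lra).
  assert (Hf : 0 < INR (fact M)) by apply INR_fact_lt_0.
  assert (H3 : / INR (fact M) <= exp (INR M) / INR M ^ M).
  { assert (0 < INR M ^ M) by (apply pow_lt; lra).
    apply (Rmult_le_reg_l (INR M ^ M)); auto. unfold Rdiv in *.
    replace (INR M ^ M * (exp (INR M) * / INR M ^ M)) with (exp (INR M)) by (field; lra). lra. }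
  apply Rle_trans with ((INR M + w) ^ M * (exp (INR M) / INR M ^ M)).
  { apply Rmult_le_compat; auto. apply prodR_nonneg; intros; pose proof (pos_INR i); lra.
    left; apply Rinv_0_lt_compat; auto. }
  replace ((INR M + w) ^ M * (exp (INR M) / INR M ^ M)) with (exp (INR M) * (1 + w / INR M) ^ M).
  2:{ unfold Rdiv. replace ((1 + w * / INR M)) with ((INR M + w) * / INR M) by (field; lra).
      rewrite Rpow_mult_distr, pow_inv. ring. }
  rewrite exp_plus. apply Rmult_le_compat_l; [left; apply exp_pos|].
  apply Rle_trans with (exp (w / INR M) ^ M).
  { apply pow_incr. split; [|apply exp_ineq1_le]. assert (0 <= w / INR M) by (apply Rdiv_le_0_compat; lra). lra. }
  rewrite exp_pow_nat. right. f_equal. field. lra.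
Qed.

Lemma harmonic_tail L m : (1 <= L)%nat ->
  sumR (fun i => / (INR (L + i) + 1)) m <= ln (INR (L + m) / INR L).
Proof.
  intros HL. assert (HLr : 1 <= INR L) by (apply (le_INR 1); auto).
  induction m.
  - simpl. rewrite Nat.add_0_r. unfold Rdiv. rewrite Rinv_r by lra. rewrite ln_1. lra.
  - simpl sumR. assert (H := ln_succ_ratio (L + m) ltac:(lia)).
    replace (ln (INR (L + S m) / INR L)) with (ln (INR (L + m) / INR L) + ln ((INR (L+m) + 1) / INR (L + m))).
    + lra.
    + assert (1 <= INR (L + m)) by (apply (le_INR 1); lia).
      rewrite <- ln_mult by (apply Rdiv_lt_0_compat; lra). f_equal.
      rewrite Nat.add_succ_r, S_INR. field. lra.
Qed.

Lemma prod_tail L m w : 0 <= w ->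
  prodR (fun i => 1 + w / (INR (L + i) + 1)) m <= exp (w * sumR (fun i => / (INR (L + i) + 1)) m).
Proof.
  intros Hw. induction m; simpl sumR; simpl prodR; [rewrite Rmult_0_r, exp_0; lra|].
  rewrite (Rmult_plus_distr_l w), exp_plus. apply Rmult_le_compat.
  - apply prodR_nonneg. intros i _. assert (0 <= w / (INR (L+i) + 1)) by (apply Rdiv_le_0_compat; [lra|pose proof (pos_INR (L+i)); lra]). lra.
  - assert (0 <= w / (INR (L+m) + 1)) by (apply Rdiv_le_0_compat; [lra|pose proof (pos_INR (L+m)); lra]). lra.
  - auto.
  - apply exp_ineq1_le.
Qed.

Lemma prod_A_bound M L w rho : 0 <= w -> 1 <= rho -> (1 <= L)%nat ->
  INR M * exp (1 - rho) <= INR L ->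
  prodR (fun i => 1 + w / (INR i + 1)) M <= exp (INR L + rho * w).
Proof.
  intros Hw Hr HL HML.
  destruct (le_lt_dec M L) as [HML'|HML'].
  - eapply Rle_trans; [apply prod_A_small; auto|]. apply exp_le_exp.
    apply le_INR in HML'. nra.
  - replace M with (L + (M - L))%nat by lia. rewrite prodR_split.
    set (m := (M - L)%nat).
    assert (HLr : 1 <= INR L) by (apply (le_INR 1); auto).
    assert (Ht := prod_tail L m w Hw). assert (Hh := harmonic_tail L m HL).
    assert (Hln : ln (INR (L + m) / INR L) <= rho - 1).
    { replace (rho - 1) with (ln (exp (rho - 1))) by apply ln_exp.
      apply ln_le_ln. apply Rdiv_lt_0_compat; [apply lt_0_INR; lia| lra].
      unfold m. replace (L + (M - L))%nat with M by lia.
      apply (Rmult_le_reg_r (INR L)); [lra|]. unfold Rdiv. rewrite Rmult_assoc, Rinv_l by lra.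
      replace (1 - rho) with (- (rho - 1)) in HML by ring. rewrite exp_Ropp in HML.
      assert (0 < exp (rho - 1)) by apply exp_pos.
      apply (Rmult_le_compat_r (exp (rho - 1))) in HML; [|lra].
      rewrite Rmult_assoc, Rinv_l in HML by lra. lra. }
    apply Rle_trans with (exp (INR L + w) * exp (w * (rho - 1))).
    + apply Rmult_le_compat.
      * apply prodR_nonneg. intros i _. assert (0 <= w / (INR i + 1)) by (apply Rdiv_le_0_compat; [lra|pose proof (pos_INR i); lra]). lra.
      * apply prodR_nonneg. intros i _. assert (0 <= w / (INR (L+i) + 1)) by (apply Rdiv_le_0_compat; [lra|pose proof (pos_INR (L+i)); lra]). lra.
      * apply prod_A_small; auto.
      * eapply Rle_trans; [apply Ht|]. apply exp_le_exp. apply Rmult_le_compat_l; [lra|]. lra.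
    + rewrite <- exp_plus. apply exp_le_exp. nra.
Qed.

Lemma ceil_exists x : 0 <= x -> exists L : nat, (1 <= L)%nat /\ x <= INR L /\ INR L <= x + 1.
Proof.
  intros Hx. destruct (archimed x) as [H1 H2].
  assert (Hz : (0 < up x)%Z). { apply lt_IZR. simpl. lra. }
  exists (Z.to_nat (up x)). rewrite INR_IZR_INZ, Z2Nat.id by lia.
  split; [lia|]. split; lra.
Qed.

Lemma pmf_nonneg l m : 0 <= l -> 0 <= poisson_pmf l m.
Proof. intros Hl. unfold poisson_pmf. apply Rdiv_le_0_compat.
  apply Rmult_le_pos; [left; apply exp_pos| apply pow_le; auto]. apply INR_fact_lt_0. Qed.

Lemma pmf_series l : is_series (poisson_pmf l) 1.
Proof.
  assert (H := is_exp_Reals l). unfold is_pseries in H.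
  apply (is_series_scal_l (exp (- l))) in H.
  replace 1 with (scal (exp (- l)) (exp l)).
  2:{ change (scal (exp (- l)) (exp l)) with (exp (-l) * exp l). rewrite <- exp_plus. replace (-l + l) with 0 by ring. apply exp_0. }
  revert H. apply is_series_ext. intros m.
  change (scal (exp (- l)) (scal (pow_n l m) (/ INR (fact m)))) with (exp (-l) * (pow_n l m * / INR (fact m))).
  rewrite pow_n_pow. unfold poisson_pmf. unfold Rdiv. symmetry; apply Rmult_assoc.
Qed.

Lemma Series_zero : Series (fun _ => 0) = 0.
Proof. rewrite (Series_ext _ (fun n => 0 * 1)) by (intros; ring). rewrite Series_scal_l. ring. Qed.

Lemma ex_series_pb l a B : 0 <= l -> (forall m, Rabs (a m) <= B) ->
  ex_series (fun m => poisson_pmf l m * a m).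
Proof.
  intros Hl HB. apply (@ex_series_le R_AbsRing R_CompleteNormedModule _ (fun m => B * poisson_pmf l m)).
  - intros m. change (norm (poisson_pmf l m * a m)) with (Rabs (poisson_pmf l m * a m)).
    rewrite Rabs_mult, Rabs_pos_eq by (apply pmf_nonneg; auto).
    rewrite Rmult_comm. apply Rmult_le_compat_r; [apply pmf_nonneg; auto| auto].
  - exists (B * 1). apply (@is_series_scal_l R_AbsRing R_NormedModule B (poisson_pmf l) 1). apply pmf_series.
Qed.

Definition Ep l (a : nat -> R) := Series (fun m => poisson_pmf l m * a m).

Lemma Ep_const l c : Ep l (fun _ => c) = c.
Proof. unfold Ep. rewrite Series_scal_r. rewrite (is_series_unique _ _ (pmf_series l)). ring. Qed.

Lemma Ep_plus l a b Ba Bb : 0 <= l -> (forall m, Rabs (a m) <= Ba) -> (forall m, Rabs (b m) <= Bb) ->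
  Ep l (fun m => a m + b m) = Ep l a + Ep l b.
Proof. intros Hl Ha Hb. unfold Ep. rewrite <- Series_plus by (eapply ex_series_pb; eauto).
  apply Series_ext. intros; ring. Qed.

Lemma Ep_ext l a b : (forall m, a m = b m) -> Ep l a = Ep l b.
Proof. intros H. unfold Ep. apply Series_ext. intros m; rewrite H; reflexivity. Qed.

Lemma Ep_scal l c a : Ep l (fun m => c * a m) = c * Ep l a.
Proof. unfold Ep. rewrite <- Series_scal_l. apply Series_ext. intros; ring. Qed.

Lemma Ep_mono l a b Ba Bb : 0 <= l -> (forall m, Rabs (a m) <= Ba) -> (forall m, Rabs (b m) <= Bb) ->
  (forall m, a m <= b m) -> Ep l a <= Ep l b.
Proof.
  intros Hl Ha Hb Hab. unfold Ep.
  assert (E : Series (fun m => poisson_pmf l m * b m) - Series (fun m => poisson_pmf l m * a m)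
              = Series (fun m => poisson_pmf l m * (b m - a m))).
  { rewrite <- Series_minus by (eapply ex_series_pb; eauto). apply Series_ext; intros; ring. }
  assert (0 <= Series (fun m => poisson_pmf l m * (b m - a m))).
  { rewrite <- Series_zero. apply Series_le.
    - intros m. split; [lra|]. apply Rmult_le_pos; [apply pmf_nonneg; auto| specialize (Hab m); lra].
    - apply (ex_series_pb l _ (Ba + Bb)); auto. intros m. unfold Rminus. eapply Rle_trans; [apply Rabs_triang|].
      rewrite Rabs_Ropp. specialize (Ha m); specialize (Hb m). lra. }
  lra.
Qed.

Lemma Ep_abs l a B : 0 <= l -> (forall m, Rabs (a m) <= B) -> Rabs (Ep l a) <= B.
Proof.
  intros Hl Ha. assert (HB : 0 <= B) by (specialize (Ha O); pose proof (Rabs_pos (a O)); lra).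
  apply Rabs_le. split.
  - rewrite <- (Ep_const l (- B)). apply (Ep_mono l _ _ B B); auto.
    + intros; rewrite Rabs_Ropp, Rabs_pos_eq; lra.
    + intros m. specialize (Ha m). apply Rabs_le_between in Ha. lra.
  - rewrite <- (Ep_const l B). apply (Ep_mono l _ _ B B); auto.
    + intros; rewrite Rabs_pos_eq; lra.
    + intros m. specialize (Ha m). apply Rabs_le_between in Ha. lra.
Qed.

Lemma sum_f_R0_sumR a N : sum_f_R0 a N = sumR a (S N).
Proof. induction N; simpl in *; [ring|]. rewrite IHN. reflexivity. Qed.

Lemma Ep_finite l a B N : 0 <= l -> (forall m, Rabs (a m) <= B) -> (forall m, (N <= m)%nat -> a m = 0) ->
  Ep l a = sumR (fun m => poisson_pmf l m * a m) N.
Proof.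
  intros Hl Ha Hz. unfold Ep. destruct N.
  - rewrite (Series_ext _ (fun _ => 0)) by (intros m; rewrite Hz by lia; ring). rewrite Series_zero. reflexivity.
  - rewrite (Series_incr_n _ (S N)) by (lia || (eapply ex_series_pb; eauto)).
    rewrite (Series_ext (fun k => _) (fun _ => 0)) by (intros m; rewrite Hz by lia; ring).
    rewrite Series_zero, sum_f_R0_sumR. simpl pred. ring.
Qed.

From Stdlib Require Import FunctionalExtensionality.

Lemma PE_cons l ls f : pois_expect (l :: ls) f = Ep l (fun m => pois_expect ls (fun t => f (m :: t))).
Proof. reflexivity. Qed.

Lemma PE_abs ls f B : List.Forall (fun l => 0 <= l) ls ->
  (forall t, length t = length ls -> Rabs (f t) <= B) -> Rabs (pois_expect ls f) <= B.
Proof.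
  revert f. induction ls as [|l ls IH]; intros f Hls Hf.
  - simpl. apply Hf. reflexivity.
  - inversion Hls; subst. rewrite PE_cons. apply Ep_abs; auto.
    intros m. apply IH; auto. intros t Ht. apply Hf. simpl. lia.
Qed.

Lemma PE_mono ls f g Bf Bg : List.Forall (fun l => 0 <= l) ls ->
  (forall t, length t = length ls -> Rabs (f t) <= Bf) ->
  (forall t, length t = length ls -> Rabs (g t) <= Bg) ->
  (forall t, length t = length ls -> f t <= g t) -> pois_expect ls f <= pois_expect ls g.
Proof.
  revert f g. induction ls as [|l ls IH]; intros f g Hls Hf Hg Hfg.
  - simpl. apply Hfg. reflexivity.
  - inversion Hls; subst. rewrite !PE_cons. apply (Ep_mono l _ _ Bf Bg); auto.
    + intros m. apply PE_abs; auto. intros t Ht. apply Hf. simpl; lia.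
    + intros m. apply PE_abs; auto. intros t Ht. apply Hg. simpl; lia.
    + intros m. apply IH; auto; intros t Ht; [apply Hf|apply Hg|apply Hfg]; simpl; lia.
Qed.

Section Var.
Variable g : nat -> R.
Variable B : R.
Hypothesis HgB : forall m, Rabs (g m) <= B.

Definition Gs (t : list nat) : R := fold_right (fun x s => g x + s) 0 t.
Definition sumL (h : R -> R) (ls : list R) : R := fold_right (fun l s => h l + s) 0 ls.

Lemma Gs_bound t : Rabs (Gs t) <= INR (length t) * B.
Proof. induction t; simpl Gs; simpl length. rewrite Rabs_R0; simpl; lra.
  rewrite S_INR. eapply Rle_trans; [apply Rabs_triang|]. specialize (HgB a). lra. Qed.

Lemma B_nonneg : 0 <= B.
Proof. specialize (HgB O). pose proof (Rabs_pos (g O)). lra. Qed.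

Lemma sq_bound x y : Rabs x <= y -> Rabs (x ^ 2) <= y ^ 2.
Proof. intros H. rewrite <- RPow_abs. apply pow_incr. split; [apply Rabs_pos|auto]. Qed.

Lemma sumL_Ep_abs ls (h : nat -> R) Bh : List.Forall (fun l => 0 <= l) ls -> (forall m, Rabs (h m) <= Bh) ->
  Rabs (sumL (fun l => Ep l h) ls) <= INR (length ls) * Bh.
Proof. intros Hls Hh. induction Hls; simpl sumL; simpl length. rewrite Rabs_R0; simpl; lra.
  rewrite S_INR. eapply Rle_trans; [apply Rabs_triang|]. assert (Rabs (Ep x h) <= Bh) by (apply Ep_abs; auto). lra. Qed.

Lemma PE_var ls : List.Forall (fun l => 0 <= l) ls -> forall a,
  pois_expect ls (fun t => (a + Gs t) ^ 2) <=
  (a + sumL (fun l => Ep l g) ls) ^ 2 + sumL (fun l => Ep l (fun m => g m ^ 2)) ls.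
Proof.
  induction ls as [|l ls IH]; intros Hls a.
  - simpl. lra.
  - inversion Hls as [|? ? Hl Hls']; subst. rewrite PE_cons. simpl sumL.
    set (mu' := sumL (fun l => Ep l g) ls). set (nu' := sumL (fun l => Ep l (fun m => g m ^ 2)) ls).
    assert (HB := B_nonneg).
    assert (Hinner : forall m, pois_expect ls (fun t => (a + Gs (m :: t)) ^ 2)
                             = pois_expect ls (fun t => ((a + g m) + Gs t) ^ 2)).
    { intros m. f_equal. apply functional_extensionality. intros t. simpl Gs. f_equal. ring. }
    assert (Hg2 : forall m, Rabs (g m ^ 2) <= B ^ 2) by (intros; apply sq_bound; auto).
    assert (Hmu' : Rabs mu' <= INR (length ls) * B) by (apply sumL_Ep_abs; auto).
    assert (Hnu' : Rabs nu' <= INR (length ls) * B ^ 2) by (apply sumL_Ep_abs; auto).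
    set (n' := INR (length ls)) in *. assert (Hn' : 0 <= n') by apply pos_INR.
    apply Rle_trans with (Ep l (fun m => (a + mu' + g m) ^ 2 + nu')).
    + apply (Ep_mono l _ _ ((Rabs a + B + n' * B) ^ 2) ((Rabs a + n' * B + B) ^ 2 + n' * B ^ 2)); auto.
      * intros m. rewrite Hinner. apply PE_abs; auto. intros t Ht. apply sq_bound.
        eapply Rle_trans; [apply Rabs_triang|]. eapply Rle_trans; [apply Rplus_le_compat; [apply Rabs_triang| apply Gs_bound]|].
        rewrite Ht. specialize (HgB m). fold n'. lra.
      * intros m. eapply Rle_trans; [apply Rabs_triang|]. apply Rplus_le_compat; [|auto].
        apply sq_bound. eapply Rle_trans; [apply Rabs_triang|]. eapply Rle_trans; [apply Rplus_le_compat_r; apply Rabs_triang|].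
        specialize (HgB m). lra.
      * intros m. rewrite Hinner. eapply Rle_trans; [apply IH; auto|]. unfold mu', nu'. right; ring.
    + set (c := a + mu').
      rewrite (Ep_ext l _ (fun m => (c ^ 2 + nu') + ((2 * c) * g m + g m ^ 2))) by (intros; ring).
      rewrite (Ep_plus l _ _ (Rabs (c ^ 2 + nu')) (Rabs (2 * c) * B + B ^ 2)); auto.
      2:{ intros; lra. }
      2:{ intros m. eapply Rle_trans; [apply Rabs_triang|]. rewrite Rabs_mult. apply Rplus_le_compat; auto.
          apply Rmult_le_compat_l; auto. apply Rabs_pos. }
      rewrite Ep_const, (Ep_plus l _ _ (Rabs (2 * c) * B) (B ^ 2)); auto.
      2:{ intros m. rewrite Rabs_mult. apply Rmult_le_compat_l; auto. apply Rabs_pos. }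
      rewrite Ep_scal. unfold c. set (mu := Ep l g). set (nu := Ep l (fun m => g m ^ 2)).
      assert (0 <= mu ^ 2) by (apply pow2_ge_0). change (Ep l (fun m : nat => g m * (g m * 1))) with nu. change (sumL (fun l0 : R => Ep l0 (fun m : nat => g m * (g m * 1))) ls) with nu'. nra.
Qed.
End Var.

Definition gfun (k : nat) (n : R) (M : nat) (x : nat) : R :=
  (if Nat.eqb x 0 then 0 else 1) - 1 + ucoef k n M x.

Lemma C_seen_cons x N : C_seen (x :: N) = (if Nat.eqb x 0 then 0 else 1) + C_seen N.
Proof. unfold C_seen. simpl filter. destruct (Nat.eqb x 0); simpl negb; cbv iota; [ring|].
  simpl length. rewrite S_INR. ring. Qed.

Lemma fingerprint_cons x N j : fingerprint (x :: N) j = ((if Nat.eqb x j then 1 else 0) + fingerprint N j)%nat.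
Proof. unfold fingerprint. simpl filter. destruct (Nat.eqb x j); reflexivity. Qed.

Lemma fold_fp_cons k n M x N s c :
  fold_right Rplus 0 (map (fun j => ucoef k n M j * INR (fingerprint (x :: N) j)) (seq s c)) =
  (if andb (Nat.leb s x) (Nat.ltb x (s + c)) then ucoef k n M x else 0) +
  fold_right Rplus 0 (map (fun j => ucoef k n M j * INR (fingerprint N j)) (seq s c)).
Proof.
  revert s. induction c; intros s.
  - simpl. destruct (Nat.leb s x) eqn:E1, (Nat.ltb x (s + 0)) eqn:E; simpl; try ring.
    apply Nat.ltb_lt in E. apply Nat.leb_le in E1. lia.
  - simpl seq. simpl map. simpl fold_right. rewrite IHc. rewrite fingerprint_cons, plus_INR.
    destruct (Nat.eqb x s) eqn:Exs.
    + apply Nat.eqb_eq in Exs. subst s.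
      replace (Nat.leb x x && Nat.ltb x (x + S c))%bool with true by (symmetry; apply andb_true_iff; split; [apply Nat.leb_le|apply Nat.ltb_lt]; lia).
      replace (Nat.leb (S x) x && Nat.ltb x (S x + c))%bool with false by (symmetry; apply andb_false_iff; left; apply Nat.leb_gt; lia).
      simpl INR. ring.
    + apply Nat.eqb_neq in Exs.
      replace (Nat.leb s x && Nat.ltb x (s + S c))%bool with (Nat.leb (S s) x && Nat.ltb x (S s + c))%bool.
      * simpl INR. ring.
      * destruct (Nat.leb s x) eqn:E1, (Nat.leb (S s) x) eqn:E2; try (apply Nat.leb_le in E1); try (apply Nat.leb_gt in E1);
        try (apply Nat.leb_le in E2); try (apply Nat.leb_gt in E2); simpl; try lia; try reflexivity; replace (S s + c)%nat with (s + S c)%nat by lia; reflexivity.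
Qed.

Lemma ucoef_out k n M x : andb (Nat.leb 1 x) (Nat.leb x M) = false -> ucoef k n M x = 0.
Proof. intros H. unfold ucoef. rewrite H. reflexivity. Qed.

Lemma C_tilde_G k n M N : C_tilde k n M N - INR (length N) = Gs (gfun k n M) N.
Proof.
  induction N as [|x N IH].
  - unfold C_tilde, C_seen. simpl. induction (seq 1 M) as [|j s IHs]; simpl; [ring|].
    unfold fingerprint in *. simpl in *. lra.
  - unfold C_tilde in *. rewrite C_seen_cons, fold_fp_cons. simpl Gs. rewrite <- IH.
    simpl length. rewrite S_INR. unfold gfun.
    replace (if (Nat.leb 1 x && Nat.ltb x (1 + M))%bool then ucoef k n M x else 0) with (ucoef k n M x).
    + ring.
    + destruct (Nat.leb 1 x && Nat.ltb x (1 + M))%bool eqn:E.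
      * reflexivity.
      * apply ucoef_out. apply andb_false_iff in E. apply andb_false_iff.
        destruct E as [E|E]; [left; auto| right]. apply Nat.ltb_ge in E. apply Nat.leb_gt. lia.
Qed.

Lemma C_seen_le N : C_seen N <= INR (length N).
Proof. induction N; [unfold C_seen; simpl; lra|]. rewrite C_seen_cons. simpl length. rewrite S_INR.
  destruct (Nat.eqb a 0); lra. Qed.

Lemma C_seen_nonneg N : 0 <= C_seen N.
Proof. unfold C_seen. apply pos_INR. Qed.

Lemma clip_le k n M N C : C_seen N <= C -> C <= INR k ->
  (C_hat k n M N - C) ^ 2 <= (C_tilde k n M N - C) ^ 2.
Proof.
  intros H1 H2. unfold C_hat. set (x := C_tilde k n M N) in *. set (s := C_seen N) in *.
  unfold Rmax, Rmin. destruct (Rle_dec x s) as [h|h]; [destruct (Rle_dec s (INR k))| destruct (Rle_dec x (INR k))].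
  - assert (0 <= (s - x) * (2*C - s - x)) by (apply Rmult_le_pos; lra). nra.
  - lra.
  - lra.
  - assert (0 <= (x - INR k) * (x + INR k - 2 * C)) by (apply Rmult_le_pos; lra). nra.
Qed.

Lemma urn_length k ks : is_urn k ks -> (length ks <= k)%nat.
Proof.
  intros [HF HS]. subst k. induction HF; simpl; [lia|]. lia.
Qed.

Lemma prodR_front f n : prodR f (S n) = f O * prodR (fun i => f (S i)) n.
Proof. induction n; simpl in *; [ring|]. rewrite IHn. ring. Qed.

Lemma A_ident M w : 0 < w ->
  sumR (fun i => U (S M) (S i) / INR (fact M) * w ^ i) (S M) = prodR (fun i => 1 + w / (INR i + 1)) M.
Proof.
  intros Hw. assert (H := U_ident (S M) w).
  rewrite sumR_front, prodR_front in H. unfold U at 1 in H. rewrite ust_S0 in H.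
  change (INR 0) with 0 in H. rewrite Rplus_0_r, Rmult_0_l, Rplus_0_l in H.
  rewrite (sumR_ext _ (fun i => w * (U (S M) (S i) * w ^ i))) in H by (intros; simpl pow; ring).
  rewrite sumR_scal in H. apply Rmult_eq_reg_l in H; [|lra].
  rewrite (sumR_ext _ (fun i => / INR (fact M) * (U (S M) (S i) * w ^ i))) by (intros; unfold Rdiv; ring).
  rewrite sumR_scal, H, fact_prodR, <- prodR_inv by (intros i _; pose proof (pos_INR i); lra).
  rewrite <- prodR_mult. apply prodR_ext. intros i _. rewrite S_INR. field. pose proof (pos_INR i); lra.
Qed.

Lemma U_nonneg a b : 0 <= U a b.
Proof. apply pos_INR. Qed.

Lemma gfun_zero k n M m : (S M <= m)%nat -> gfun k n M m = 0.
Proof. intros H. unfold gfun. rewrite ucoef_out.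
  - destruct (Nat.eqb m 0) eqn:E; [apply Nat.eqb_eq in E; lia| ring].
  - apply andb_false_iff. right. apply Nat.leb_gt. lia. Qed.

Definition Bg k n M := 1 + sumR (fun j => Rabs (ucoef k n M j)) (S M).

Lemma gfun_bound k n M m : Rabs (gfun k n M m) <= Bg k n M.
Proof.
  unfold Bg. assert (Hs : 0 <= sumR (fun j => Rabs (ucoef k n M j)) (S M)) by (apply sumR_nonneg; intros; apply Rabs_pos).
  destruct (le_lt_dec (S M) m) as [H|H].
  - rewrite gfun_zero by auto. rewrite Rabs_R0. lra.
  - unfold gfun. destruct (Nat.eqb m 0) eqn:E.
    + apply Nat.eqb_eq in E. subst. rewrite ucoef_out by reflexivity. rewrite Rabs_left by lra. lra.
    + assert (Rabs (ucoef k n M m) <= sumR (fun j => Rabs (ucoef k n M j)) (S M)).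
      { apply (sumR_term_le (fun j => Rabs (ucoef k n M j))); auto. intros; apply Rabs_pos. }
      replace (1 - 1 + ucoef k n M m) with (ucoef k n M m) by ring. lra.
Qed.

Lemma pmf0 l : poisson_pmf l 0 = exp (- l).
Proof. unfold poisson_pmf. simpl. field. Qed.

Lemma ucoef_S k n M j : (j < M)%nat ->
  ucoef k n M (S j) = (-1) ^ (M + 1) * (INR (fact (S j)) / INR (fact M)) * (INR k / n) ^ (S j) * stirling1R (M + 1) (S j + 1).
Proof. intros H. unfold ucoef. replace (Nat.leb 1 (S j) && Nat.leb (S j) M)%bool with true. reflexivity.
  symmetry. apply andb_true_iff. split; apply Nat.leb_le; lia. Qed.

Lemma mu_closed k n M t : (1 <= k)%nat -> 0 < n -> (1 <= t)%nat ->
  let l := n * INR t / INR k in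
  Ep l (gfun k n M) = exp (- l) * (-1) ^ (M + 1) * prodR (fun i => INR t - INR i) (S M) / (INR t * INR (fact M)).
Proof.
  intros Hk Hn Ht l.
  assert (Hkr : 0 < INR k) by (apply lt_0_INR; lia). assert (Htr : 0 < INR t) by (apply lt_0_INR; lia).
  assert (Hl : 0 <= l) by (unfold l; apply Rdiv_le_0_compat; [apply Rmult_le_pos; lra|lra]).
  assert (Hf : 0 < INR (fact M)) by apply INR_fact_lt_0.
  rewrite (Ep_finite l _ (Bg k n M) (S M)); auto.
  2:{ apply gfun_bound. } 2:{ apply gfun_zero. }
  rewrite sumR_front, pmf0.
  replace (gfun k n M 0) with (-1) by (unfold gfun; rewrite ucoef_out by reflexivity; simpl; ring).
  rewrite (sumR_ext _ (fun j => (exp (- l) * (-1) ^ (M + 1) / INR (fact M) / INR t) *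
                               (stirling1R (M + 1) (S (S j)) * INR t ^ (S (S j))))).
  2:{ intros j Hj. unfold gfun. rewrite ucoef_S by auto. simpl Nat.eqb. cbv iota.
      unfold poisson_pmf. replace (S j + 1)%nat with (S (S j)) by lia.
      replace l with (INR t * (n / INR k)) by (unfold l; field; lra).
      rewrite Rpow_mult_distr.
      replace ((n / INR k) ^ S j) with (/ ((INR k / n) ^ S j)) by (rewrite <- pow_inv; f_equal; field; lra).
      simpl pow. field. repeat split; try lra. apply pow_nonzero. apply Rgt_not_eq. apply Rdiv_lt_0_compat; lra.
      pose proof (INR_fact_lt_0 (S j)); lra. }
  rewrite sumR_scal.
  assert (HS := S_ident (S M) (INR t)).
  rewrite sumR_front, sumR_front in HS.
  replace (M + 1)%nat with (S M) by lia.
  rewrite stirR_eq in HS. rewrite (stirR_eq (S M) 1) in HS. unfold U at 1 2 in HS.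
  rewrite ust_S0, ust_S1 in HS. simpl INR in HS at 1.
  set (Sg := sumR (fun i => stirling1R (S M) (S (S i)) * INR t ^ S (S i)) M) in *.
  assert (ESg : Sg = prodR (fun i => INR t - INR i) (S M) - (-1) ^ (S M + 1) * INR (fact M) * INR t)
    by (simpl pow in HS |- *; lra).
  rewrite ESg. replace (S M + 1)%nat with (S (S M)) by lia.
  simpl pow. field_simplify; [|lra|lra].
  assert (Hsq : ((-1) ^ M) ^ 2 = 1).
  { rewrite <- pow_mult. rewrite Nat.mul_comm, pow_mult. simpl. replace (-1 * (-1 * 1)) with 1 by ring. apply pow1. }
  rewrite Hsq. unfold Rdiv. apply Rmult_eq_compat_r. ring.
Qed.

Lemma mu_bound k n M t : (1 <= k)%nat -> 0 < n -> (1 <= t)%nat -> 1 <= n / INR k ->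
  Rabs (Ep (n * INR t / INR k) (gfun k n M)) <= exp (- (n / INR k - 1) * INR (S M)).
Proof.
  intros Hk Hn Ht Hr. rewrite mu_closed by auto.
  assert (Hkr : 0 < INR k) by (apply lt_0_INR; lia). assert (Htr : 0 < INR t) by (apply lt_0_INR; lia).
  assert (Hf : 0 < INR (fact M)) by apply INR_fact_lt_0.
  destruct (le_lt_dec t M) as [HtM|HtM].
  - rewrite (prodR_zero _ _ t) by (lia || ring). unfold Rdiv. rewrite !Rmult_0_r, Rmult_0_l, Rabs_R0.
    left; apply exp_pos.
  - set (P := prodR (fun i => INR t - INR i) (S M)).
    assert (HP0 : 0 <= P). { apply prodR_nonneg. intros i Hi. assert (INR i <= INR t) by (apply le_INR; lia). lra. }
    assert (HP : P <= INR t ^ S M).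
    { rewrite <- prodR_const. apply prodR_le. intros i Hi. assert (INR i <= INR t) by (apply le_INR; lia). pose proof (pos_INR i). lra. }
    assert (Hsg : Rabs ((-1) ^ (M + 1)) = 1) by (rewrite <- RPow_abs; replace (Rabs (-1)) with 1 by (rewrite Rabs_left; lra); apply pow1).
    unfold Rdiv. rewrite !Rabs_mult, Hsg. rewrite (Rabs_pos_eq P) by lra. rewrite (Rabs_pos_eq (exp _)) by (left; apply exp_pos).
    rewrite (Rabs_pos_eq (/ _)) by (left; apply Rinv_0_lt_compat; nra).
    assert (H1 : P * / (INR t * INR (fact M)) <= INR t ^ M / INR (fact M)).
    { simpl pow in HP. unfold Rdiv. rewrite Rinv_mult.
      apply (Rmult_le_reg_l (INR t)); [lra|]. replace (INR t * (P * (/ INR t * / INR (fact M)))) with (P * / INR (fact M)) by (field; lra).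
      rewrite <- Rmult_assoc. apply Rmult_le_compat_r; [left; apply Rinv_0_lt_compat; lra| lra]. }
    assert (H2 : INR t ^ M / INR (fact M) <= exp (INR t)) by (apply pow_fact_le_exp; lra).
    apply Rle_trans with (exp (- (n * INR t / INR k)) * exp (INR t)).
    + rewrite Rmult_1_r. rewrite Rmult_assoc. apply Rmult_le_compat_l; [left; apply exp_pos|]. lra.
    + rewrite <- exp_plus. apply exp_le_exp.
      assert (INR (S M) <= INR t) by (apply le_INR; lia).
      replace (- (n * INR t / INR k) + INR t) with (- (n / INR k - 1) * INR t) by (field; lra). nra.
Qed.

Lemma sqrt_pow_sq w J : 0 <= w -> (sqrt w ^ J) ^ 2 = w ^ J.
Proof. intros Hw. rewrite <- pow_mult, Nat.mul_comm, pow_mult. rewrite <- Rsqr_pow2, Rsqr_sqrt; auto. Qed.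

Lemma nu_term k n M t L rho J : (1 <= k)%nat -> 0 < n -> (1 <= t)%nat -> (1 <= J)%nat -> (J <= M)%nat ->
  1 <= rho -> rho ^ 2 <= (n / INR k) ^ 2 / 2 -> (1 <= L)%nat -> INR M * exp (1 - rho) <= INR L ->
  let l := n * INR t / INR k in
  poisson_pmf l J * gfun k n M J ^ 2 <= exp 1 * INR M * exp (- l / 2) * exp (2 * INR L).
Proof.
  intros Hk Hn Ht HJ HJM Hrho Hrho2 HL HML l.
  assert (Hkr : 0 < INR k) by (apply lt_0_INR; lia). assert (Htr : 0 < INR t) by (apply lt_0_INR; lia).
  assert (HJr : 1 <= INR J) by (apply (le_INR 1); lia).
  assert (HJM' : INR J <= INR M) by (apply le_INR; lia).
  assert (Hf : 0 < INR (fact M)) by apply INR_fact_lt_0.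
  assert (HfJ : 0 < INR (fact J)) by apply INR_fact_lt_0.
  set (r := n / INR k) in *.
  assert (Hr : 0 < r) by (unfold r; apply Rdiv_lt_0_compat; lra).
  set (x := INR t / r).
  assert (Hx : 0 < x) by (unfold x; apply Rdiv_lt_0_compat; lra).
  set (a := U (S M) (S J) / INR (fact M)).
  assert (Ha : 0 <= a) by (unfold a; apply Rdiv_le_0_compat; [apply U_nonneg| lra]).
  destruct J as [|j]; [lia|].
  assert (Hterm : poisson_pmf l (S j) * gfun k n M (S j) ^ 2 = exp (- l) * INR (fact (S j)) * x ^ (S j) * a ^ 2).
  { unfold gfun. simpl Nat.eqb. cbv iota. rewrite ucoef_S by lia.
    replace (M + 1)%nat with (S M) by lia. replace (S j + 1)%nat with (S (S j)) by lia.
    rewrite stirR_eq. unfold a, poisson_pmf, x.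
    replace l with (INR t * r) by (unfold l, r; field; lra).
    replace (INR k / n) with (/ r) by (unfold r; field; lra).
    assert (Hs : forall e, ((-1) ^ e) ^ 2 = 1).
    { intros e. rewrite <- pow_mult, Nat.mul_comm, pow_mult. replace ((-1) ^ 2) with 1 by (simpl; ring). apply pow1. }
    replace (1 - 1) with 0 by ring. rewrite Rplus_0_l. unfold Rdiv. rewrite !Rpow_mult_distr, !Hs, !pow_inv.
    assert (0 < r ^ S j) by (apply pow_lt; lra).
    field. repeat split; lra. }
  rewrite Hterm. set (J := S j) in *.
  assert (HfJ' := fact_upper J ltac:(unfold J; lia)).
  set (w := sqrt (INR J * x)).
  assert (Hw : 0 < w) by (unfold w; apply sqrt_lt_R0; nra).
  assert (Hw2 : w ^ 2 = INR J * x) by (unfold w; rewrite <- Rsqr_pow2; apply Rsqr_sqrt; nra).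
  assert (HA := A_ident M w Hw).
  assert (HAb := prod_A_bound M L w rho ltac:(lra) Hrho HL HML).
  assert (Hterm_le : a * w ^ J <= exp (INR L + rho * w)).
  { eapply Rle_trans; [|apply HAb]. rewrite <- HA.
    apply (sumR_term_le (fun i => U (S M) (S i) / INR (fact M) * w ^ i)).
    - intros i _. apply Rmult_le_pos; [apply Rdiv_le_0_compat; [apply U_nonneg|lra]| apply pow_le; lra].
    - unfold J; lia. }
  assert (Hwj : (w ^ J) ^ 2 = INR J ^ J * x ^ J).
  { rewrite <- pow_mult, Nat.mul_comm, pow_mult, Hw2. apply Rpow_mult_distr. }
  assert (Hsq : (a * w ^ J) ^ 2 <= exp (INR L + rho * w) ^ 2).
  { apply pow_incr. split; [apply Rmult_le_pos; [auto|apply pow_le; lra]| auto]. }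
  rewrite exp_pow_nat in Hsq. simpl INR in Hsq.
  assert (Hkey : 2 * rho * w <= l / 2 + INR J).
  { assert (Hl : l = INR t * r) by (unfold l, r; field; lra).
    assert (Hxr : x * r = INR t) by (unfold x; field; lra).
    assert (0 <= l) by (rewrite Hl; nra).
    apply Rsqr_incr_0_var; [| lra].
    unfold Rsqr. replace (2 * rho * w * (2 * rho * w)) with (4 * rho ^ 2 * w ^ 2) by ring.
    rewrite Hw2.
    assert (4 * rho ^ 2 * (INR J * x) <= 2 * r ^ 2 * (INR J * x)) by (apply Rmult_le_compat_r; nra).
    assert (2 * r ^ 2 * (INR J * x) = 2 * l * INR J) by (rewrite Hl, <- Hxr; ring).
    assert (0 <= (l / 2 - INR J) ^ 2) by apply pow2_ge_0.
    nra. }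
  assert (Hexp : exp (- l) * exp (- INR J) * exp ((1 + 1) * (INR L + rho * w)) <= exp (- l / 2) * exp (2 * INR L)).
  { rewrite <- !exp_plus. apply exp_le_exp. lra. }
  apply Rle_trans with (exp (- l) * (exp 1 * INR J * INR J ^ J * exp (- INR J)) * x ^ J * a ^ 2).
  { apply Rmult_le_compat_r; [apply pow2_ge_0|]. apply Rmult_le_compat_r; [left; apply pow_lt; lra|].
    apply Rmult_le_compat_l; [left; apply exp_pos| auto]. }
  replace (exp (- l) * (exp 1 * INR J * INR J ^ J * exp (- INR J)) * x ^ J * a ^ 2)
    with (exp 1 * INR J * (exp (- l) * exp (- INR J)) * (a * w ^ J) ^ 2)
    by (rewrite Rpow_mult_distr, Hwj; ring).
  apply Rle_trans with (exp 1 * INR J * (exp (- l) * exp (- INR J)) * exp ((1 + 1) * (INR L + rho * w))).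
  { apply Rmult_le_compat_l; [|auto]. apply Rmult_le_pos; [apply Rmult_le_pos; [left; apply exp_pos|lra]|].
    left; apply Rmult_lt_0_compat; apply exp_pos. }
  assert (0 < exp 1) by apply exp_pos.
  replace (exp 1 * INR J * (exp (- l) * exp (- INR J)) * exp ((1 + 1) * (INR L + rho * w)))
    with (exp 1 * INR J * (exp (- l) * exp (- INR J) * exp ((1 + 1) * (INR L + rho * w)))) by ring.
  apply Rle_trans with (exp 1 * INR J * (exp (- l / 2) * exp (2 * INR L))).
  { apply Rmult_le_compat_l; [nra|auto]. }
  assert (0 < exp (- l / 2) * exp (2 * INR L)) by (apply Rmult_lt_0_compat; apply exp_pos).
  replace (exp 1 * INR M * exp (- l / 2) * exp (2 * INR L)) with (exp 1 * INR M * (exp (- l / 2) * exp (2 * INR L))) by ring.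
  apply Rmult_le_compat_r; [lra|]. apply Rmult_le_compat_l; lra.
Qed.

Lemma nu_bound k n M t L rho : (1 <= k)%nat -> 0 < n -> (1 <= t)%nat ->
  1 <= rho -> rho ^ 2 <= (n / INR k) ^ 2 / 2 -> (1 <= L)%nat -> INR M * exp (1 - rho) <= INR L ->
  1 <= n / INR k ->
  Ep (n * INR t / INR k) (fun m => gfun k n M m ^ 2) <=
  exp (- (n / INR k)) + exp 1 * INR M ^ 2 * exp (- (n / INR k) / 2) * exp (2 * INR L).
Proof.
  intros Hk Hn Ht Hrho Hrho2 HL HML Hr1.
  set (l := n * INR t / INR k).
  assert (Hkr : 0 < INR k) by (apply lt_0_INR; lia). assert (Htr : 1 <= INR t) by (apply (le_INR 1); lia).
  assert (Hl0 : 0 <= l) by (unfold l; apply Rdiv_le_0_compat; [apply Rmult_le_pos; lra| lra]).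
  assert (Hlr : n / INR k <= l) by (unfold l; unfold Rdiv; rewrite (Rmult_comm n (INR t)), Rmult_assoc;
     replace (n * / INR k) with (1 * (n * / INR k)) at 1 by ring; apply Rmult_le_compat_r; [unfold Rdiv in Hr1; lra| lra]).
  rewrite (Ep_finite l _ (Bg k n M ^ 2) (S M)); auto.
  2:{ intros m. apply sq_bound. apply gfun_bound. }
  2:{ intros m Hm. rewrite gfun_zero by auto. ring. }
  rewrite sumR_front, pmf0.
  replace (gfun k n M 0) with (-1) by (unfold gfun; rewrite ucoef_out by reflexivity; simpl; ring).
  assert (Hs : sumR (fun j => poisson_pmf l (S j) * gfun k n M (S j) ^ 2) M <=
               sumR (fun _ => exp 1 * INR M * exp (- l / 2) * exp (2 * INR L)) M).
  { apply sumR_le. intros j Hj. apply (nu_term k n M t L rho (S j)); auto; lia. }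
  rewrite sumR_const in Hs.
  assert (H1 : exp (- l) <= exp (- (n / INR k))) by (apply exp_le_exp; lra).
  assert (H2 : exp (- l / 2) <= exp (- (n / INR k) / 2)) by (apply exp_le_exp; lra).
  assert (0 <= INR M) by apply pos_INR.
  assert (0 < exp 1) by apply exp_pos. assert (0 < exp (2 * INR L)) by apply exp_pos.
  assert (INR M * (exp 1 * INR M * exp (- l / 2) * exp (2 * INR L)) <= exp 1 * INR M ^ 2 * exp (- (n / INR k) / 2) * exp (2 * INR L)).
  { replace (INR M * (exp 1 * INR M * exp (- l / 2) * exp (2 * INR L))) with ((exp 1 * INR M ^ 2 * exp (2 * INR L)) * exp (- l / 2)) by ring.
    replace (exp 1 * INR M ^ 2 * exp (- (n / INR k) / 2) * exp (2 * INR L)) with ((exp 1 * INR M ^ 2 * exp (2 * INR L)) * exp (- (n / INR k) / 2)) by ring.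
    apply Rmult_le_compat_l; auto. apply Rmult_le_pos; [apply Rmult_le_pos; [lra| apply pow2_ge_0]| lra]. }
  simpl pow at 1. lra.
Qed.

Lemma exp_ge_sq x : 0 <= x -> x ^ 2 / 2 <= exp x.
Proof. intros Hx. apply (pow_fact_le_exp x 2) in Hx. simpl in Hx. simpl pow. lra. Qed.
Lemma exp_ge_4 x : 0 <= x -> x ^ 4 / 24 <= exp x.
Proof. intros Hx. apply (pow_fact_le_exp x 4) in Hx. simpl fact in Hx. simpl INR in Hx. simpl pow in *. lra. Qed.

Lemma F_aux_i r : 1000 <= r -> 14 * r * exp (1 - 7/10 * r) <= exp (- r / 10).
Proof.
  intros Hr. assert (He := exp_le_3).
  assert (H1 := exp_ge_sq (6/10 * r) ltac:(lra)).
  assert (exp (1 - 7/10 * r) = exp 1 * exp (- (7/10) * r)) by (rewrite <- exp_plus; f_equal; ring).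
  assert (exp (- r / 10) = exp (6/10 * r) * exp (- (7/10) * r)) by (rewrite <- exp_plus; f_equal; field).
  assert (0 < exp (- (7/10) * r)) by apply exp_pos. assert (0 < exp 1) by apply exp_pos.
  assert (14 * r * exp 1 <= exp (6/10 * r)) by nra.
  nra.
Qed.

Lemma F_aux_ii r Mr : 1000 <= r -> 1 <= Mr -> 3 + 2 * ln Mr - r / 2 <= Mr * exp (- r / 10) / (7 * r).
Proof.
  intros Hr HM. set (x := ln Mr). assert (HMx : Mr = exp x) by (unfold x; rewrite exp_ln; lra).
  assert (Hx0 : 0 <= x) by (unfold x; rewrite <- ln_1; apply ln_le_ln; lra).
  assert (Hpos : 0 < Mr * exp (- r / 10) / (7 * r)) by (apply Rdiv_lt_0_compat; [apply Rmult_lt_0_compat; [lra|apply exp_pos]| lra]).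
  destruct (Rle_dec (2 * x) (r / 2 - 3)) as [Hc|Hc]; [lra|].
  apply Rnot_le_lt in Hc.
  set (y := 6/10 * x - 6/10).
  assert (Hy : 148 <= y) by (unfold y; lra).
  assert (Hey := exp_ge_4 y ltac:(lra)).
  assert (Hpoly : 7 * (4 * x + 6) * (3 + 2 * x) <= y ^ 4 / 24).
  { assert (Hxy : x = (y + 6/10) / (6/10)) by (unfold y; field).
    assert (E1 : 7 * (4 * x + 6) * (3 + 2 * x) = 14 * (2 * y + 3) ^ 2 / (36/100)) by (rewrite Hxy; field).
    rewrite E1. assert ((2 * y + 3) ^ 2 <= (21/10 * y) ^ 2) by (apply pow_incr; lra).
    assert (y ^ 2 >= 148 ^ 2) by (apply Rle_ge; apply pow_incr; lra).
    assert (y ^ 4 = y ^ 2 * y ^ 2) by ring. nra. }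
  assert (Hr' : r < 4 * x + 6) by lra.
  assert (H1 : exp y <= Mr * exp (- r / 10)).
  { rewrite HMx, <- exp_plus. apply exp_le_exp. unfold y. lra. }
  assert (H2 : Mr * exp (- r / 10) / (7 * (4 * x + 6)) <= Mr * exp (- r / 10) / (7 * r)).
  { unfold Rdiv. apply Rmult_le_compat_l; [left; apply Rmult_lt_0_compat; [lra|apply exp_pos]|].
    apply Rinv_le_contravar; lra. }
  assert (H3 : 3 + 2 * x <= Mr * exp (- r / 10) / (7 * (4 * x + 6))).
  { apply (Rmult_le_reg_r (7 * (4 * x + 6))); [lra|]. unfold Rdiv. rewrite Rmult_assoc, Rinv_l by lra. nra. }
  lra.
Qed.

Lemma F_region1 r lnk (M L : nat) : 1000 <= r -> 1 <= INR M -> INR M * r = 7/2 * lnk ->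
  INR L <= INR M * exp (1 - 7/10 * r) + 1 ->
  exp 1 * INR M ^ 2 * exp (- r / 2) * exp (2 * INR L) <= exp (lnk / r ^ 2 * exp (- r / 10)).
Proof.
  intros Hr HM HMr HL. set (Mr := INR M) in *.
  assert (HMx : Mr ^ 2 = exp (2 * ln Mr)) by (replace (2 * ln Mr) with (ln Mr + ln Mr) by ring; rewrite exp_plus, exp_ln by lra; simpl; ring).
  rewrite HMx, <- !exp_plus. apply exp_le_exp.
  assert (HG : lnk / r ^ 2 * exp (- r / 10) = Mr * exp (- r / 10) / (7 * r) + Mr * exp (- r / 10) / (7 * r)).
  { replace lnk with (Mr * r / (7/2)) by lra. field. lra. }
  rewrite HG.
  assert (Hi := F_aux_i r Hr). assert (Hii := F_aux_ii r Mr Hr HM).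
  assert (2 * Mr * exp (1 - 7/10 * r) <= Mr * exp (- r / 10) / (7 * r)).
  { apply (Rmult_le_reg_r (7 * r)); [lra|]. replace (Mr * exp (- r / 10) / (7 * r) * (7 * r)) with (Mr * exp (- r / 10)) by (field; lra). nra. }
  lra.
Qed.

Lemma F_region23 r lnk (M L : nat) : 1000 <= r -> 1 <= INR M -> INR M * r = 7/2 * lnk -> lnk < exp (r / 10) ->
  INR L <= INR M * exp (1 - 7/10 * r) + 1 ->
  exp 1 * INR M ^ 2 * exp (- r / 2) * exp (2 * INR L) <= exp (- r / 10) / 3.
Proof.
  intros Hr HM HMr Hl HL. set (Mr := INR M) in *.
  assert (HM1 : Mr <= exp (r / 10)).
  { assert (0 < exp (r/10)) by apply exp_pos.
    apply (Rmult_le_reg_r r); [lra|]. nra. }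
  assert (HM2 : Mr ^ 2 <= exp (r / 5)).
  { replace (exp (r / 5)) with (exp (r / 10) ^ 2) by (rewrite exp_pow_nat; f_equal; simpl; field).
    apply pow_incr; lra. }
  assert (HL2 : INR L <= 2).
  { assert (Mr * exp (1 - 7/10 * r) <= exp (r / 10) * exp (1 - 7/10 * r)) by (apply Rmult_le_compat_r; [left; apply exp_pos| auto]).
    rewrite <- exp_plus in H. assert (exp (r / 10 + (1 - 7/10 * r)) <= exp 0) by (apply exp_le_exp; lra).
    rewrite exp_0 in H0. lra. }
  assert (He2 : 3 <= exp 2) by (pose proof (exp_ineq1_le 2); lra).
  apply Rle_trans with (exp 1 * exp (r / 5) * exp (- r / 2) * exp 4).
  { apply Rmult_le_compat; try (left; apply exp_pos).
    - apply Rmult_le_pos; [apply Rmult_le_pos; [left; apply exp_pos| apply pow2_ge_0]| left; apply exp_pos].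
    - apply Rmult_le_compat_r; [left; apply exp_pos|]. apply Rmult_le_compat_l; [left; apply exp_pos| auto].
    - apply exp_le_exp. lra. }
  rewrite <- !exp_plus.
  assert (exp (1 + r / 5 + - r / 2 + 4) * exp 2 <= exp (- r / 10)).
  { rewrite <- exp_plus. apply exp_le_exp. lra. }
  assert (0 < exp (1 + r / 5 + - r / 2 + 4)) by apply exp_pos. nra.
Qed.

Lemma D_bound r lnk (M : nat) : 1000 <= r -> 1 <= lnk -> 1 <= INR M -> INR M * r = 7/2 * lnk ->
  (exp lnk * exp (- (r - 1) * INR (S M))) ^ 2 + exp lnk * exp (- r) <= 2 / 3 * (exp lnk * exp (- r / 10)).
Proof.
  intros Hr Hl HM HMr. rewrite S_INR. set (Mr := INR M) in *.
  assert (H1 : 3 * lnk <= (r - 1) * (Mr + 1)).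
  { assert (Mr <= lnk / 2). { apply (Rmult_le_reg_r r); [lra|]. nra. } nra. }
  assert (Hr2 : r <= 7/2 * lnk) by nra.
  assert (HA : (exp lnk * exp (- (r - 1) * (Mr + 1))) ^ 2 <= exp (- (4) * lnk)).
  { rewrite <- exp_plus, exp_pow_nat. apply exp_le_exp. simpl INR. lra. }
  assert (HB : exp (- (4) * lnk) * 3 <= exp lnk * exp (- r / 10)).
  { rewrite <- exp_plus. assert (3 <= exp (465/100 * lnk)) by (pose proof (exp_ineq1_le (465/100 * lnk)); lra).
    apply Rle_trans with (exp (- (4) * lnk) * exp (465/100 * lnk)).
    - apply Rmult_le_compat_l; [left; apply exp_pos| auto].
    - rewrite <- exp_plus. apply exp_le_exp. lra. }
  assert (HC : exp (- r) * 3 <= exp (- r / 10)).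
  { assert (3 <= exp (9/10 * r)) by (pose proof (exp_ineq1_le (9/10 * r)); lra).
    apply Rle_trans with (exp (- r) * exp (9/10 * r)); [apply Rmult_le_compat_l; [left; apply exp_pos| auto]|].
    rewrite <- exp_plus. apply exp_le_exp. lra. }
  assert (0 < exp lnk) by apply exp_pos.
  nra.
Qed.

Lemma sumL_map_le h (f : nat -> R) ks b : (forall x, In x ks -> h (f x) <= b) ->
  sumL h (map f ks) <= INR (length ks) * b.
Proof. induction ks as [|x ks IH]; intros H; cbn [length map]; [unfold sumL; simpl; lra|]. rewrite S_INR.
  assert (h (f x) <= b) by (apply H; left; auto). assert (sumL h (map f ks) <= INR (length ks) * b) by (apply IH; intros; apply H; right; auto).
  unfold sumL in *. simpl. lra. Qed.

Lemma sumL_map_abs h (f : nat -> R) ks b : (forall x, In x ks -> Rabs (h (f x)) <= b) ->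
  Rabs (sumL h (map f ks)) <= INR (length ks) * b.
Proof. induction ks as [|x ks IH]; intros H; cbn [length map]; [unfold sumL; simpl; rewrite Rabs_R0; lra|]. rewrite S_INR.
  assert (Rabs (h (f x)) <= b) by (apply H; left; auto). assert (Rabs (sumL h (map f ks)) <= INR (length ks) * b) by (apply IH; intros; apply H; right; auto).
  unfold sumL in *. simpl. eapply Rle_trans; [apply Rabs_triang|]. lra. Qed.

Theorem theorem2 :
  exists eta c C' A1 A2 : R,
    0 < eta /\ 0 < c /\ 0 < C' /\ 0 < A1 /\ 0 < A2 /\
    forall (k : nat) (n : R) (M : nat) (ks : list nat),
      (3 <= k)%nat ->
      n > eta * INR k ->
      INR M = (7 / 2) * INR k * ln (INR k) / n ->
      is_urn k ks ->
      pois_expect (rates k n ks)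
        (fun N => (C_hat k n M N - INR (length ks)) ^ 2)
      <= INR k * exp (- c * n / INR k)
         + Rpower (INR k) (- (1 / 2) - (7 / 2) * (INR k / n) * ln (INR k / (exp 1 * n)))
         + Rterm c C' A1 A2 k n.
Proof.
  exists 1000, (1/10), 1, 10, 1. split; [lra|]. split; [lra|]. split; [lra|]. split; [lra|]. split; [lra|].
  intros k n M ks Hk Hn HM Hurn.
  set (kr := INR k) in *.
  assert (Hkr : 3 <= kr) by (unfold kr; replace 3 with (INR 3) by (simpl; lra); apply le_INR; auto).
  assert (Hn0 : 0 < n) by lra.
  set (lnk := ln kr).
  assert (Hlnk : 1 <= lnk).
  { unfold lnk. rewrite <- (ln_exp 1). apply ln_le_ln; [apply exp_pos|]. pose proof exp_le_3. lra. }
  assert (Hklnk : kr = exp lnk) by (unfold lnk; rewrite exp_ln; lra).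
  set (r := n / kr).
  assert (Hr : 1000 <= r) by (unfold r; apply (Rmult_le_reg_r kr); [lra|]; replace (n / kr * kr) with n by (field; lra); lra).
  assert (HMr : INR M * r = 7/2 * lnk) by (rewrite HM; unfold r, lnk; field; lra).
  assert (HM1 : 1 <= INR M).
  { assert (0 < INR M) by nra. destruct M; [simpl in *; lra|]. apply (le_INR 1); lia. }
  set (rho := 7/10 * r).
  assert (Hrho : 1 <= rho) by (unfold rho; lra).
  assert (Hrho2 : rho ^ 2 <= (n / INR k) ^ 2 / 2) by (fold kr; fold r; unfold rho; nra).
  destruct (ceil_exists (INR M * exp (1 - rho))) as [L [HL1 [HL2 HL3]]].
  { apply Rmult_le_pos; [lra| left; apply exp_pos]. }
  destruct Hurn as [HF HS].
  assert (Hlen : (length ks <= k)%nat) by (apply urn_length; split; auto).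
  set (C := INR (length ks)).
  assert (HC : 0 <= C <= kr) by (split; [apply pos_INR| apply le_INR; auto]).
  set (ls := rates k n ks).
  assert (Hls : List.Forall (fun l => 0 <= l) ls).
  { unfold ls, rates. apply Forall_map. eapply Forall_impl; [|apply HF]. intros x Hx. simpl.
    apply Rdiv_le_0_compat; [apply Rmult_le_pos; [lra|apply pos_INR]| fold kr; lra]. }
  assert (Hlenls : length ls = length ks) by (unfold ls, rates; apply length_map).
  set (g := gfun k n M). set (Bg0 := Bg k n M).
  assert (HgB : forall m, Rabs (g m) <= Bg0) by (intros; apply gfun_bound).
  assert (HB0 : 0 <= Bg0) by (specialize (HgB O); pose proof (Rabs_pos (g O)); lra).
  assert (Step1 : pois_expect ls (fun N => (C_hat k n M N - C) ^ 2) <= pois_expect ls (fun N => (0 + Gs g N) ^ 2)).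
  { apply (PE_mono ls _ _ (kr ^ 2) ((C * Bg0) ^ 2)); auto.
    - intros t Ht. apply sq_bound.
      assert (0 <= C_hat k n M t <= kr).
      { unfold C_hat. split.
        + apply Rmin_glb; [|fold kr; lra]. eapply Rle_trans; [apply C_seen_nonneg| apply Rmax_r].
        + apply Rmin_r. }
      apply Rabs_le. lra.
    - intros t Ht. apply sq_bound. rewrite Rplus_0_l. eapply Rle_trans; [apply Gs_bound; auto|].
      rewrite Ht, Hlenls. fold C. lra.
    - intros t Ht. eapply Rle_trans; [apply clip_le|].
      + eapply Rle_trans; [apply C_seen_le|]. rewrite Ht, Hlenls. fold C. lra.
      + fold kr; lra.
      + right. rewrite Rplus_0_l. f_equal. unfold C. rewrite <- Hlenls, <- Ht. apply C_tilde_G. }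
  assert (Step2 := PE_var g Bg0 HgB ls Hls 0).
  set (emu := exp (- (r - 1) * INR (S M))).
  set (F := exp 1 * INR M ^ 2 * exp (- r / 2) * exp (2 * INR L)).
  assert (Hmu : Rabs (sumL (fun l => Ep l g) ls) <= C * emu).
  { unfold ls, rates, C. apply sumL_map_abs. intros x Hx.
    assert (1 <= x)%nat by (rewrite Forall_forall in HF; apply HF; auto).
    apply mu_bound; auto; try lia. fold kr. fold r. lra. }
  assert (Hnu : sumL (fun l => Ep l (fun m => g m ^ 2)) ls <= C * (exp (- r) + F)).
  { unfold ls, rates, C. apply sumL_map_le. intros x Hx.
    assert (1 <= x)%nat by (rewrite Forall_forall in HF; apply HF; auto).
    eapply Rle_trans; [apply (nu_bound k n M x L rho); auto; try lia; fold kr; fold r; lra|].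
    fold kr. fold r. unfold F. right. reflexivity. }
  assert (HE : pois_expect ls (fun N => (C_hat k n M N - C) ^ 2) <= (kr * emu) ^ 2 + kr * (exp (- r) + F)).
  { assert (0 <= emu) by (left; apply exp_pos). assert (0 <= F).
    { unfold F. apply Rmult_le_pos; [apply Rmult_le_pos; [apply Rmult_le_pos; [left; apply exp_pos| apply pow2_ge_0]|]|]; left; apply exp_pos. }
    assert (0 < exp (- r)) by apply exp_pos.
    assert ((sumL (fun l => Ep l g) ls) ^ 2 <= (kr * emu) ^ 2).
    { rewrite <- (Rsqr_pow2), <- Rsqr_pow2. rewrite (Rsqr_abs (sumL _ _)). apply Rsqr_incr_1; [| apply Rabs_pos| nra].
      eapply Rle_trans; [apply Hmu|]. apply Rmult_le_compat_r; lra. }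
    assert (C * (exp (- r) + F) <= kr * (exp (- r) + F)) by (apply Rmult_le_compat_r; lra).
    rewrite Rplus_0_l in Step2. lra. }
  assert (HD := D_bound r lnk M Hr Hlnk HM1 HMr).
  rewrite <- Hklnk in HD.
  assert (Hc : - (1/10) * n / kr = - r / 10) by (unfold r; field; lra).
  rewrite Hc.
  assert (HRp : 0 < Rpower (INR k) (- (1 / 2) - (7 / 2) * (INR k / n) * ln (INR k / (exp 1 * n)))) by (unfold Rpower; apply exp_pos).
  assert (HL3' : INR L <= INR M * exp (1 - 7/10 * r) + 1) by (unfold rho in HL3; lra).
  fold kr in HRp |- *.
  unfold Rterm. fold kr. fold lnk.
  destruct (Rle_dec n (10 * kr * ln lnk)) as [H1|H1].
  - assert (HG : kr ^ 2 * lnk / n ^ 2 * exp (- (1/10) * n / kr) = lnk / r ^ 2 * exp (- r / 10)).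
    { unfold r. replace (- (1/10) * n / kr) with (- (n / kr) / 10) by (field; lra). field. lra. }
    rewrite HG.
    assert (HF1 := F_region1 r lnk M L Hr HM1 HMr HL3').
    fold F in HF1.
    assert (0 < kr) by lra.
    assert (kr * F <= kr * exp (lnk / r ^ 2 * exp (- r / 10))) by (apply Rmult_le_compat_l; lra).
    unfold emu in HE. fold C. assert (kr * (exp (- r) + F) = kr * exp (- r) + kr * F) by ring.
    assert (0 <= kr * exp (- r / 10)) by (apply Rmult_le_pos; [lra| left; apply exp_pos]). lra.
  - assert (Hll : lnk < exp (r / 10)).
    { assert (ln lnk < r / 10).
      { apply Rnot_le_lt in H1. apply (Rmult_lt_reg_l (10 * kr)); [lra|].
        unfold r. replace (10 * kr * (n / kr / 10)) with n by (field; lra). lra. }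
      rewrite <- (exp_ln lnk) by lra. apply exp_increasing. auto. }
    assert (HF2 := F_region23 r lnk M L Hr HM1 HMr Hll HL3').
    fold F in HF2.
    assert (HR0 : 0 <= (if Rle_dec n (1 * kr * sqrt lnk)
                then kr * Rpower (1 * (kr / n) * ln (kr ^ 2 * lnk / n ^ 2)) (2 * n / kr) else 0)).
    { destruct (Rle_dec _ _); [|lra]. apply Rmult_le_pos; [lra| left; unfold Rpower; apply exp_pos]. }
    assert (0 < kr) by lra.
    assert (kr * F <= kr * (exp (- r / 10) / 3)) by (apply Rmult_le_compat_l; lra).
    unfold emu in HE. fold C. assert (kr * (exp (- r) + F) = kr * exp (- r) + kr * F) by ring.
    assert (0 <= kr * exp (- r / 10)) by (apply Rmult_le_pos; [lra| left; apply exp_pos]). lra.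
Qed.
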